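(* Let $S=(G,P,\Lambda,I)$ be a completely simple semigroup with non-singular sandwich matrix $P$, and suppose the group $G$ is an equational domain in the group language $\mathcal{L}_G$. Then the set $M=\{(x,y)\in S^2\mid x=(1,1_G,1)\text{ or }y=(1,1_G,1)\}$ is algebraic over $S$ in the language $\mathcal{L}_S$.
   Context: Rees representation: a completely simple semigroup $S=(G,P,\Lambda,I)$ is given by a group $G$, index sets $\Lambda,I$ (each containing an element $1$), and a matrix $P=(p_{i\lambda})_{i\in I,\lambda\in\Lambda}$ over $G$ normalised so that $p_{1\lambda}=p_{i1}=1_G$; elements are triples $(\lambda,g,i)$ with product $(\lambda,g,i)(\mu,h,j)=(\lambda,gp_{i\mu}h,j)$ and inversion $(\lambda,g,i)^{-1}=(\lambda,p_{i\lambda}^{-1}g^{-1}p_{i\lambda}^{-1},i)$. $P$ is non-singular if it has no two equal rows and no two equal columns. The language $\mathcal{L}_S$ is $\{\cdot,{}^{-1}\}$ plus a constant for each element of $S$; the group language $\mathcal{L}_G$ is $\{\cdot,{}^{-1},1\}$ plus a constant for each element of $G$. A subset is algebraic if it is the solution set of a system of equations (equalities of terms) in the relevant language; a structure is an equational domain (e.d.) if every finite union of algebraic sets is algebraic. (Equivalently, a group $G$ is an e.d. in $\mathcal{L}_G$ iff it has no zero-divisors, where $x\ne1$ is a zero-divisor if there is $y\ne 1$ with $[x,gyg^{-1}]=1$ for all $g\in G$.) *)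

(* Defs.v *)
From mathcomp Require Import all_boot.
Set Implicit Arguments. Unset Strict Implicit. Unset Printing Implicit Defensive.

Record AGroup := {
  gcarrier :> Type;
  gmul : gcarrier -> gcarrier -> gcarrier;
  ginv : gcarrier -> gcarrier;
  gone : gcarrier;
  gmulA : forall x y z, gmul x (gmul y z) = gmul (gmul x y) z;
  gmul1 : forall x, gmul gone x = x;
  gmulV : forall x, gmul (ginv x) x = gone
}.

Definition algebraic (X V T : Type) (ev : (V -> X) -> T -> X)
    (A : (V -> X) -> Prop) : Prop :=
  exists E : T * T -> Prop,
    forall p : V -> X, A p <-> (forall e, E e -> ev p e.1 = ev p e.2).

Inductive gterm (C V : Type) :=
  | gt_var : V -> gterm C V
  | gt_const : C -> gterm C V
  | gt_one : gterm C V
  | gt_mul : gterm C V -> gterm C V -> gterm C V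
  | gt_inv : gterm C V -> gterm C V.

Fixpoint gterm_eval (G : AGroup) (V : Type) (p : V -> G) (t : gterm G V) : G :=
  match t with
  | gt_var v => p v
  | gt_const c => c
  | gt_one => gone G
  | gt_mul t1 t2 => gmul (gterm_eval p t1) (gterm_eval p t2)
  | gt_inv t1 => ginv (gterm_eval p t1)
  end.

Definition group_ed (G : AGroup) : Prop :=
  forall (n k : nat) (A : 'I_k.+1 -> ('I_n -> G) -> Prop),
    (forall j, algebraic (@gterm_eval G 'I_n) (A j)) ->
    algebraic (@gterm_eval G 'I_n) (fun p => exists j, A j p).

Definition rees (G : AGroup) (Lam I : Type) : Type := (Lam * G * I)%type.

Definition rees_mul (G : AGroup) (Lam I : Type) (P : I -> Lam -> G)
    (x y : rees G Lam I) : rees G Lam I :=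
  let '(l, g, i) := x in let '(m, h, j) := y in
  (l, gmul (gmul g (P i m)) h, j).

Definition rees_inv (G : AGroup) (Lam I : Type) (P : I -> Lam -> G)
    (x : rees G Lam I) : rees G Lam I :=
  let '(l, g, i) := x in
  (l, gmul (gmul (ginv (P i l)) (ginv g)) (ginv (P i l)), i).

Definition normalised (G : AGroup) (Lam I : Type) (l1 : Lam) (i1 : I)
    (P : I -> Lam -> G) : Prop :=
  (forall l, P i1 l = gone G) /\ (forall i, P i l1 = gone G).

Definition nonsingular (G : AGroup) (Lam I : Type) (P : I -> Lam -> G) : Prop :=
  (forall i j : I, (forall l, P i l = P j l) -> i = j) /\
  (forall l m : Lam, (forall i, P i l = P i m) -> l = m).

Inductive sterm (C V : Type) :=
  | st_var : V -> sterm C V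
  | st_const : C -> sterm C V
  | st_mul : sterm C V -> sterm C V -> sterm C V
  | st_inv : sterm C V -> sterm C V.

Fixpoint sterm_eval (G : AGroup) (Lam I : Type) (P : I -> Lam -> G) (V : Type)
    (p : V -> rees G Lam I) (t : sterm (rees G Lam I) V) : rees G Lam I :=
  match t with
  | st_var v => p v
  | st_const c => c
  | st_mul t1 t2 => rees_mul P (sterm_eval P p t1) (sterm_eval P p t2)
  | st_inv t1 => rees_inv P (sterm_eval P p t1)
  end.

(* Main.v *)
Require Import Defs.
From mathcomp Require Import all_boot.
From Stdlib Require Import Classical.
Set Implicit Arguments. Unset Strict Implicit.

Lemma gmul1l (G : AGroup) (x : G) : gmul (gone G) x = x.
Proof. exact: gmul1. Qed.

Lemma gmulVr (G : AGroup) (x : G) : gmul x (ginv x) = gone G.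
Proof.
set y := ginv x.
transitivity (gmul (gmul (ginv y) y) (gmul x y)); first by rewrite gmulV gmul1l.
rewrite -gmulA (gmulA y x y) /y gmulV gmul1l.
by rewrite gmulV.
Qed.

Lemma gmulr1 (G : AGroup) (x : G) : gmul x (gone G) = x.
Proof. by rewrite -(gmulV x) gmulA gmulVr gmul1l. Qed.

Lemma ginv1 (G : AGroup) : ginv (gone G) = gone G.
Proof. by rewrite -[ginv _]gmulr1 gmulV. Qed.

Lemma ord2 (j : 'I_2) : j = ord0 \/ j = ord_max.
Proof.
case: j => [[|[|m]] Hm]; [left|right|by []]; by apply/val_inj.
Qed.

Fixpoint tr (G : AGroup) (Lam I : Type) (l1 : Lam) (i1 : I)
  (s : 'I_2 -> sterm (rees G Lam I) 'I_2) (t : gterm G 'I_2)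
  : sterm (rees G Lam I) 'I_2 :=
  match t with
  | gt_var v => s v
  | gt_const c => @st_const _ 'I_2 (l1, c, i1)
  | gt_one => @st_const _ 'I_2 (l1, gone G, i1)
  | gt_mul a b => st_mul (@tr G Lam I l1 i1 s a) (@tr G Lam I l1 i1 s b)
  | gt_inv a => st_inv (@tr G Lam I l1 i1 s a)
  end.

Lemma tr_eval (G : AGroup) (Lam I : Type) (l1 : Lam) (i1 : I)
  (P : I -> Lam -> G) (HP : P i1 l1 = gone G)
  (s : 'I_2 -> sterm (rees G Lam I) 'I_2) (p : 'I_2 -> rees G Lam I)
  (q : 'I_2 -> G)
  (Hs : forall j, sterm_eval P p (s j) = (l1, q j, i1)) (t : gterm G 'I_2) :
  sterm_eval P p (tr l1 i1 s t) = (l1, gterm_eval q t, i1).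
Proof.
elim: t => [v|c||a IHa b IHb|a IHa] //=.
- by rewrite IHa IHb /= HP gmulr1.
- by rewrite IHa /= HP ginv1 gmulr1 gmul1l.
Qed.

Definition val (G : AGroup) (Lam I : Type) (l1 : Lam) (i1 : I)
  (P : I -> Lam -> G) (x : rees G Lam I) (im : I * Lam) : G :=
  (rees_mul P (rees_mul P (l1, gone G, im.1) x) (im.2, gone G, i1)).1.2.

Lemma val_key (G : AGroup) (Lam I : Type) (l1 : Lam) (i1 : I)
    (P : I -> Lam -> G)
    (HPnorm : normalised l1 i1 P)
    (HPns : nonsingular P) (x : rees G Lam I) :
  x = (l1, gone G, i1) <-> forall im, val l1 i1 P x im = gone G.
Proof.
case: HPnorm => Hr Hc; case: HPns => Hi Hl.
case: x => [[l g] j]; rewrite /val /=; split.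
- case=> -> -> -> [i m] /=.
  by rewrite Hc Hr !gmulr1 ?gmul1l.
- move=> H.
  have Hg : g = gone G.
    by move: (H (i1, l1)); rewrite /= Hr Hc !gmulr1 ?gmul1l.
  subst g.
  have -> : l = l1.
    apply: Hl => i; move: (H (i, l1)); rewrite /= Hc Hc !gmulr1 ?gmul1l.
    by [].
  have -> : j = i1.
    apply: Hi => m; move: (H (i1, m)); rewrite /= Hr Hr !gmulr1 ?gmul1l.
    by [].
  by [].
Qed.

Theorem mainTheorem6 (G : AGroup) (Lam I : Type) (l1 : Lam) (i1 : I)
    (P : I -> Lam -> G)
    (HPnorm : normalised l1 i1 P)
    (HPns : nonsingular P)
    (HGed : group_ed G) :
  algebraic (@sterm_eval G Lam I P 'I_2)
    (fun p : 'I_2 -> rees G Lam I =>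
       p ord0 = (l1, gone G, i1) \/ p ord_max = (l1, gone G, i1)).
Proof.
have [EG HEG] : algebraic (@gterm_eval G 'I_2)
    (fun q => exists j : 'I_2, q j = gone G).
  apply: (HGed 2 1 (fun j q => q j = gone G)) => j.
  exists (fun e => e = (gt_var _ j, gt_one _ _)) => q; split.
  - by move=> Hq e -> /=.
  - by move=> H; apply: (H _ erefl).
have HP11 : P i1 l1 = gone G by case: HPnorm => Hr _; apply: Hr.
pose sub (f : 'I_2 -> I * Lam) (j : 'I_2) : sterm (rees G Lam I) 'I_2 :=
  st_mul (st_mul (@st_const _ 'I_2 (l1, gone G, (f j).1)) (st_var _ j))
         (@st_const _ 'I_2 ((f j).2, gone G, i1)).
exists (fun e => exists f eg, EG eg /\
          e = (tr l1 i1 (sub f) eg.1, tr l1 i1 (sub f) eg.2)).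
move=> p.
have Hsub : forall f j, sterm_eval P p (sub f j) =
                        (l1, val l1 i1 P (p j) (f j), i1).
  move=> f j; rewrite /sub /val /=.
  by case: (p j) => [[l g] k].
have Hall : (forall e, (exists f eg, EG eg /\
          e = (tr l1 i1 (sub f) eg.1, tr l1 i1 (sub f) eg.2)) ->
          sterm_eval P p e.1 = sterm_eval P p e.2) <->
       (forall f, exists j, val l1 i1 P (p j) (f j) = gone G).
  split.
  - move=> H f; apply/HEG => eg Heg.
    have := H _ (ex_intro _ f (ex_intro _ eg (conj Heg erefl))).
    rewrite /= !(tr_eval HP11 (Hsub f)).
    by case.
  - move=> H e [f [eg [Heg ->]]] /=.
    rewrite !(tr_eval HP11 (Hsub f)).
    by move/HEG: (H f) => /(_ eg Heg) ->.
rewrite Hall !(val_key HPnorm HPns); split.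
- move=> [H|H] f.
  + by exists ord0.
  + by exists ord_max.
- move=> H.
  case: (classic (forall im, val l1 i1 P (p ord0) im = gone G)) => [h|h];
    [by left|right].
  have [im Him] := not_all_ex_not _ _ h.
  move=> im'.
  have [j Hj] := H (fun j => if j == ord0 then im else im').
  case: (ord2 j) => Ej; subst j; first by [].
  by move: Hj.
Qed.
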